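(* Let $\overline{t}$ be an element of $\mathbb{T}^I$. Then $\overline{t}$ belongs to $\widehat{H}$ if, and only if, there is a finite set $\{\overline{x}_1,\dots ,\overline{x}_m\}\subseteq \mathbb{Z}^I$ such that if $\overline{g}\in H$ and $\langle\overline{g},\overline{x}_j\rangle=0$ for all $1\leq j\leq m$, then $\langle\overline{g},\overline{t}\rangle=0$.
   Context: Let $I$ be an index set of non-measurable cardinality. Let $H$ denote the group $\mathbb{Z}^{(I)}$ (the direct sum of $I$ copies of $\mathbb{Z}$), identified with $\mathrm{Hom}(\mathbb{Z}^I,\mathbb{Z})$ and equipped with the topology $t_p(\mathbb{Z}^I)$ of pointwise convergence on $\mathbb{Z}^I$ (inherited from $\mathbb{Z}^{\mathbb{Z}^I}$). For $\overline{g}\in H$ and $\overline{x}\in\mathbb{Z}^I$ (or $\overline{x}\in\mathbb{T}^I$) write $\langle\overline{g},\overline{x}\rangle:=\sum_{i\in I}\overline{g}(i)\cdot\overline{x}(i)$ (a finite sum). The circle group $\mathbb{T}$ is identified with the additive group $(-1/2,1/2]$ with addition modulo $\mathbb{Z}$. The dual group $\widehat{H}$ (continuous homomorphisms $H\to\mathbb{T}$) is regarded as a subgroup of $\mathbb{T}^I$ (the dual of $H$ with the discrete topology), an element $\overline{t}\in\mathbb{T}^I$ acting as the character $\overline{g}\mapsto\langle\overline{g},\overline{t}\rangle$. *)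

(* Defs.v *)
From mathcomp Require Import all_boot all_order all_algebra.
From mathcomp Require Import finmap.
From mathcomp Require Import reals.
Set Implicit Arguments. Unset Strict Implicit. Unset Printing Implicit Defensive.
Import Order.TTheory GRing.Theory Num.Theory.
Local Open Scope ring_scope.
Local Open Scope fset_scope.

(* I has measurable cardinality iff there is a nonprincipal countably complete
   (sigma-complete) ultrafilter on I (Ulam); "non-measurable" is its negation. *)
Definition countably_complete_nonprincipal_ultrafilter (I : Type)
    (U : (I -> Prop) -> Prop) : Prop :=
  U (fun _ => True) /\
  ~ U (fun _ => False) /\
  (forall A B : I -> Prop, U A -> (forall i, A i -> B i) -> U B) /\
  (forall F : nat -> I -> Prop, (forall n, U (F n)) ->
      U (fun i => forall n, F n i)) /\
  (forall A : I -> Prop, U A \/ U (fun i => ~ A i)) /\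
  (forall i0 : I, ~ U (fun i => i = i0)).

Definition nonmeasurable_card (I : Type) : Prop :=
  ~ exists U, countably_complete_nonprincipal_ultrafilter (I := I) U.

Notation H I := {fsfun I -> int with 0%R}.

Definition pairZ (I : choiceType) (g : H I) (x : I -> int) : int :=
  \sum_(i <- finsupp g) g i * x i.

(* <g, t> for t in T^I, computed in R; its class modulo Z is the value in T. *)
Definition pairR (R : realType) (I : choiceType) (g : H I) (t : I -> R) : R :=
  \sum_(i <- finsupp g) (g i)%:~R * t i.

(* T is identified with (-1/2, 1/2] with addition mod Z. *)
Definition in_T (R : realType) (a : R) : Prop := - (1/2) < a /\ a <= 1/2.

Definition zeroT (R : realType) (a : R) : Prop := exists k : int, a = k%:~R.

(* t in T^I defines a character of H continuous for t_p(Z^I): basic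
   neighbourhoods of g are {h | <h,x_j> = <g,x_j>, j < m} for finitely many
   x_j in Z^I, and the circle carries its usual metric
   d(a,b) = min_k |a - b - k|. *)
Definition in_dual (R : realType) (I : choiceType) (t : I -> R) : Prop :=
  forall (g : H I) (e : R), 0 < e ->
    exists (m : nat) (F : 'I_m -> I -> int),
      forall h : H I, (forall j, pairZ h (F j) = pairZ g (F j)) ->
        exists k : int, `|pairR h t - pairR g t - k%:~R| < e.

(* Main.v *)
Require Import Defs.
From mathcomp Require Import all_boot all_order all_algebra.
From mathcomp Require Import finmap.
From mathcomp Require Import reals.
From mathcomp Require Import lra.
Import Order.TTheory GRing.Theory Num.Theory.
Local Open Scope ring_scope.

Section Aux.
Variable I : choiceType.

Definition lc (a b : int) (g h : H I) : H I :=
  [fsfun i in (finsupp g `|` finsupp h)%fset => a * g i + b * h i | 0].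

Lemma lcE a b g h i : lc a b g h i = a * g i + b * h i.
Proof.
rewrite /lc fsfun_fun; case: ifP => // /negbT.
rewrite in_fsetU negb_or => /andP[Hg Hh].
by rewrite !fsfun_dflt // !mulr0 addr0.
Qed.

Lemma lc_supp a b g h : (finsupp (lc a b g h) `<=` finsupp g `|` finsupp h)%fset.
Proof.
apply/fsubsetP => i; rewrite mem_finsupp lcE in_fsetU.
rewrite !mem_finsupp; apply: contraR; rewrite negb_or => /andP[/negPn/eqP -> /negPn/eqP ->].
by rewrite !mulr0 addr0.
Qed.

Lemma pairZ_sub (f : H I) (S : {fset I}) x : (finsupp f `<=` S)%fset ->
  pairZ f x = \sum_(i <- S) f i * x i.
Proof.
move=> sub; rewrite /pairZ; apply: big_fset_incl => // i _ iN.
by rewrite fsfun_dflt // mul0r.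
Qed.

Lemma pairR_sub (R : realType) (f : H I) (S : {fset I}) (x : I -> R) :
  (finsupp f `<=` S)%fset ->
  pairR f x = \sum_(i <- S) (f i)%:~R * x i.
Proof.
move=> sub; rewrite /pairR; apply: big_fset_incl => // i _ iN.
by rewrite fsfun_dflt // mul0r.
Qed.

Lemma pairZ_lc a b g h x : pairZ (lc a b g h) x = a * pairZ g x + b * pairZ h x.
Proof.
set S := (finsupp g `|` finsupp h)%fset.
rewrite (pairZ_sub _ _ x (lc_supp a b g h)) (@pairZ_sub g S x) ?fsubsetUl //.
rewrite (@pairZ_sub h S x) ?fsubsetUr // !mulr_sumr -big_split /=.
by apply: eq_bigr => i _; rewrite lcE mulrDl !mulrA.
Qed.

Lemma pairR_lc (R : realType) a b g h (x : I -> R) :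
  pairR (lc a b g h) x = a%:~R * pairR g x + b%:~R * pairR h x.
Proof.
set S := (finsupp g `|` finsupp h)%fset.
rewrite (@pairR_sub R _ _ x (lc_supp a b g h)) (@pairR_sub R g S x) ?fsubsetUl //.
rewrite (@pairR_sub R h S x) ?fsubsetUr // !mulr_sumr -big_split /=.
by apply: eq_bigr => i _; rewrite lcE rmorphD !rmorphM /= mulrDl !mulrA.
Qed.

End Aux.
Arguments lc {I}.

Section Real.
Variable R : realType.

Lemma aux_small (y : R) (k : int) : `|y| < 1/2 -> `|y - k%:~R| < 1/4 -> `|y| < 1/4.
Proof.
move=> hy; have [->|k0] := eqVneq k 0.
  by rewrite subr0.
move=> hk.
exfalso.
have k1 : 1 <= `|k%:~R : R|.
  by rewrite -intr_norm ler1z -gtz0_ge1 normr_gt0.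
have : `|k%:~R : R| <= `|y| + `|y - k%:~R|.
  by have := ler_normB y (y - k%:~R); rewrite opprB addrC subrK.
move: hy hk k1; set u := `|k%:~R : R|; set v := `|y|; set w := `|y - _|.
move=> *; lra.
Qed.

Lemma key_int (b : R) :
  (forall n : nat, exists k : int, `|b *+ n - k%:~R| < 1/4) ->
  exists k : int, b = k%:~R.
Proof.
move=> hb; have [k1 hk1] := hb 1%N; rewrite mulr1n in hk1.
set c := b - k1%:~R.
have hc : forall n : nat, exists k : int, `|c *+ n - k%:~R| < 1/4.
  move=> n; have [k hk] := hb n; exists (k - k1 *+ n).
  by rewrite /c mulrnBl rmorphB /= rmorphMn /= opprB addrA subrK.
have small : forall n : nat, `|c *+ n| < 1/4.
  elim=> [|n IH]; first by rewrite mulr0n normr0; lra.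
  have [k hk] := hc n.+1; apply: (aux_small _ k) => //.
  rewrite mulrSr (le_lt_trans (ler_normD _ _)) //.
  move: IH hk1; rewrite -/c; set u := `|c *+ n|; set v := `|c|; move=> *; lra.
exists k1; apply/eqP; rewrite -subr_eq0 -/c; apply/eqP.
apply/eqP/negPn/negP => c0.
have cp : 0 < `|c| by rewrite normr_gt0.
have cp' : 0 < `|c|^-1 by rewrite invr_gt0.
have hN := @archi_boundP R (`|c|^-1) (ltW (cp' : 0 < `|c|^-1)).
set N := Num.bound _ in hN.
have h1 : 1 < `|c| * N%:R.
  by rewrite -[X in X < _](mulfV (lt0r_neq0 cp)) ltr_pM2l.
have := small N; rewrite normrMn -[X in X < _]mulr_natr; lra.
Qed.
End Real.

Theorem lemma4p8 (R : realType) (I : choiceType) (hI : nonmeasurable_card I)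
    (t : I -> R) (ht : forall i, in_T (t i)) :
  in_dual t <->
  exists (m : nat) (x : 'I_m -> I -> int),
    forall g : H I, (forall j, pairZ g (x j) = 0) -> zeroT (pairR g t).
Proof.
split.
- move=> hd.
  have [g0 _] : exists g0 : H I, True.
    by exists (fsfun_of_ffun fsfun0_key (fun x : (fset0 : {fset I}) => 0%R) (fun _ : I => 0%R : int)).
  set z := lc 0 0 g0 g0.
  have [m [F hF]] := hd z (1/4) ltac:(lra).
  exists m, F => g hg; apply: key_int => n.
  have hz : forall j, pairZ (lc n%:Z 0 g g) (F j) = pairZ z (F j).
    by move=> j; rewrite /z !pairZ_lc hg !mulr0 !mul0r addr0.
  have [k hk] := hF (lc n%:Z 0 g g) hz.
  exists k; move: hk.
  rewrite /z !pairR_lc !mul0r !addr0 subr0.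
  by rewrite mulr_natl.
- move=> [m [x hx]] g e e0; exists m, x => h hh.
  have hz : forall j, pairZ (lc 1 (-1) h g) (x j) = 0.
    by move=> j; rewrite pairZ_lc hh mul1r mulN1r subrr.
  have [k hk] := hx (lc 1 (-1) h g) hz.
  exists k; move: hk; rewrite pairR_lc mul1r mulN1r => <-.
  by rewrite subrr normr0.
Qed.
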